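(* The dcpo $\mathcal Q\mathbb R_\ell$ is not core-compact in its Scott topology.
   Context: The Sorgenfrey line $\mathbb R_\ell$ is $\mathbb R$ with the topology generated by the half-open intervals $[a,b[$, $a<b$. $\mathcal Q\mathbb R_\ell$ is the set of non-empty compact subsets of $\mathbb R_\ell$ ordered by reverse inclusion; it is a dcpo. A space is core-compact if its lattice of open sets is a continuous lattice. *)

(* Defs.v *)
From HB Require Import structures.
From mathcomp Require Import all_boot all_order all_algebra.
From mathcomp Require Import boolp classical_sets cardinality reals.
Set Implicit Arguments. Unset Strict Implicit. Unset Printing Implicit Defensive.
Import Order.TTheory GRing.Theory Num.Theory.
Local Open Scope classical_set_scope.
Local Open Scope ring_scope.

Section Sorgenfrey.
Variable R : realType.

Definition halfopen (a b : R) : set R := [set x | a <= x /\ x < b].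

Definition sorg_open (U : set R) : Prop :=
  forall x, U x -> exists a b, a < b /\ halfopen a b x /\ halfopen a b `<=` U.

Definition sorg_compact (K : set R) : Prop :=
  forall C : set (set R), C `<=` sorg_open -> K `<=` \bigcup_(U in C) U ->
  exists D : set (set R), [/\ D `<=` C, finite_set D & K `<=` \bigcup_(U in D) U].

Definition QRl : Type := {K : set R | K !=set0 /\ sorg_compact K}.

Definition QRl_le (K L : QRl) : Prop := proj1_sig L `<=` proj1_sig K.
End Sorgenfrey.

Section Scott.
Variables (T : Type) (le : T -> T -> Prop).

Definition directed (D : set T) : Prop :=
  D !=set0 /\ forall x y, D x -> D y -> exists z, [/\ D z, le x z & le y z].

Definition is_sup (D : set T) (s : T) : Prop :=
  (forall d, D d -> le d s) /\ (forall u, (forall d, D d -> le d u) -> le s u).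

Definition upper_set (U : set T) : Prop := forall x y, U x -> le x y -> U y.

Definition scott_open (U : set T) : Prop :=
  upper_set U /\
  forall D s, directed D -> is_sup D s -> U s -> exists d, D d /\ U d.
End Scott.

(** * Core-compactness: the lattice of open sets is a continuous lattice.
    The opens, ordered by inclusion, form a complete lattice in which
    (directed) joins are unions. *)
Section CoreCompact.
Variables (T : Type) (op : set (set T)).

Definition way_below (U V : set T) : Prop :=
  forall D : set (set T), D `<=` op ->
  directed (fun A B => A `<=` B) D ->
  V `<=` \bigcup_(W in D) W -> exists W, D W /\ U `<=` W.

Definition core_compact : Prop :=
  forall V, op V -> V = \bigcup_(U in [set U | op U /\ way_below U V]) U.
End CoreCompact.

(* Main.v *)
Require Import Defs.
From HB Require Import structures.
From mathcomp Require Import all_boot all_order all_algebra.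
From mathcomp Require Import boolp classical_sets cardinality reals.
From mathcomp Require Import finmap lra archimedean.
Set Implicit Arguments. Unset Strict Implicit. Unset Printing Implicit Defensive.
Import Order.TTheory GRing.Theory Num.Theory.
Local Open Scope classical_set_scope.
Local Open Scope ring_scope.

Lemma dir_bound (T:Type) (C : set (set T)) (hC : C !=set0)
  (hdir : forall A B, C A -> C B -> exists E, [/\ C E, A `<=` E & B `<=` E])
  (s : seq {classic (set T)}) :
  (forall A, A \in s -> C A) -> exists W, C W /\ forall A, A \in s -> A `<=` W.
Proof.
elim: s => [|a s IH] Hs.
  by case: hC => W HW; exists W; split => // A; rewrite in_nil.
have [W [CW HW]] : exists W, C W /\ forall A, A \in s -> A `<=` W.
  by apply: IH => A HA; apply: Hs; rewrite inE HA orbT.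
have Ca : C a by apply: Hs; rewrite inE eqxx.
have [E [CE aE WE]] := hdir _ _ Ca CW.
exists E; split => // A; rewrite inE => /orP[/eqP->//|/HW AW].
by move=> x /AW /WE.
Qed.

Section S.
Variable R : realType.

Lemma compact_directed (K : set R) (C : set (set R)) :
  sorg_compact K -> C `<=` @sorg_open R -> C !=set0 ->
  (forall A B, C A -> C B -> exists E, [/\ C E, A `<=` E & B `<=` E]) ->
  K `<=` \bigcup_(U in C) U -> exists W, C W /\ K `<=` W.
Proof.
move=> cK Co Cn Cd KC.
have [D [DC fD KD]] := cK C Co KC.
have /finite_fsetP [X DX] : finite_set (D : set {classic (set R)}) by [].
have [W [CW HW]] : exists W, C W /\ forall A, A \in X -> A `<=` W.
  by apply: (@dir_bound R C Cn Cd (X : seq _)) => A HA; apply: DC; rewrite DX.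
exists W; split => // x /KD [A DA Ax].
by apply: (HW A) => //; move: DA; rewrite DX.
Qed.

Lemma compact_closed (K : set R) x : sorg_compact K -> ~ K x ->
  exists t, x < t /\ forall y, x <= y -> y < t -> ~ K y.
Proof.
move=> cK nKx.
pose C := [set A : set R | exists t, x < t /\ A = [set y | y < x \/ t <= y]].
have [] := @compact_directed K C cK.
- move=> A [t [xt ->]] y /= [yx|ty].
    exists y, x; split => //; split; first by split.
    by move=> z [_ zx]; left.
  exists y, (y + 1); split; first by rewrite ltrDl.
  split; first by split => //; rewrite ltrDl.
  by move=> z [yz _]; right; apply: le_trans yz.
- exists [set y | y < x \/ x + 1 <= y]; exists (x + 1); split => //.
  by rewrite ltrDl.
- move=> A B [t1 [xt1 ->]] [t2 [xt2 ->]].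
  case: (leP t1 t2) => h.
    exists [set y | y < x \/ t1 <= y]; split.
    + by exists t1.
    + by [].
    + by move=> y /= [|] h'; [left|right; apply: le_trans h'].
  exists [set y | y < x \/ t2 <= y]; split.
  + by exists t2.
  + by move=> y /= [|] h'; [left|right; apply: le_trans h'; apply: ltW].
  + by [].
- move=> y Ky; case: (ltP y x) => h.
    exists [set y | y < x \/ x + 1 <= y]; last by left.
    by exists (x + 1); split => //; rewrite ltrDl.
  have xy : x < y by rewrite lt_neqAle h andbT; apply/eqP => E; apply: nKx; rewrite E.
  exists [set z | z < x \/ y <= z]; last by right.
  by exists y.
- move=> W [[t [xt ->]] KW]; exists t; split => // y xy yt Ky.
  case: (KW y Ky) => /=.
    by move=> yx; move: (le_lt_trans xy yx); rewrite ltxx.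
  by move=> ty; move: (le_lt_trans ty yt); rewrite ltxx.
Qed.

Lemma compactU1 (K : set R) p : sorg_compact K -> sorg_compact (K `|` [set p]).
Proof.
move=> cK C Co KC.
have [D [DC fD KD]] := cK C Co (fun y Ky => KC y (or_introl Ky)).
have [W CW Wp] := KC p (or_intror erefl).
exists (D `|` [set W]); split.
- by move=> A [/DC|->].
- by rewrite finite_setU; split => //; apply: finite_set1.
- move=> y [/KD [A DA Ay]|->]; first by exists A => //; left.
  by exists W => //; right.
Qed.

Definition box (a c : R) : set (QRl R) :=
  [set K | forall x, proj1_sig K x -> ~ (a <= x /\ x < c)].

Lemma box_open a c : scott_open (@QRl_le R) (box a c).
Proof.
split.
  by move=> K L HK HKL x Lx; apply: HK; apply: HKL.
move=> D s [[d0 Dd0] Ddir] [sup1 sup2] bs.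
apply: contrapT => H.
have H' : forall d, D d -> exists x, proj1_sig d x /\ (a <= x /\ x < c).
  move=> d Dd; apply: contrapT => nd; apply: H; exists d; split => //.
  by move=> x dx Sx; apply: nd; exists x.
have [p [Sp Dp]] : exists p, (a <= p /\ p < c) /\ forall d, D d -> proj1_sig d p.
  apply: contrapT => Hn.
  have Hn' : forall p, a <= p /\ p < c -> exists e, D e /\ ~ proj1_sig e p.
    move=> p Sp; apply: contrapT => ne; apply: Hn; exists p; split => //.
    move=> d Dd; apply: contrapT => ndp; apply: ne; exists d; split => //.
  pose C := [set O : set R | exists e, D e /\
               O = [set y | ~ (a <= y /\ y < c) \/ ~ proj1_sig e y]].
  have [] := @compact_directed (proj1_sig d0) C (proj2 (proj2_sig d0)).
  - move=> O [e [De ->]] y /= [nS|ney].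
      case: (ltP y a) => ya.
        exists y, a; split => //; split; first by split.
        by move=> z [_ za]; left => -[az _]; move: (le_lt_trans az za); rewrite ltxx.
      have cy : c <= y.
        by case: (ltP y c) => // yc; exfalso; apply: nS.
      exists y, (y + 1); split; first by rewrite ltrDl.
      split; first by split => //; rewrite ltrDl.
      move=> z [yz _]; left => -[_ zc].
      by move: (le_lt_trans (le_trans cy yz) zc); rewrite ltxx.
    have [t [yt Ht]] := compact_closed (proj2 (proj2_sig e)) ney.
    exists y, t; split => //; split; first by split.
    by move=> z [yz zt]; right; apply: Ht.
  - by exists [set y | ~ (a <= y /\ y < c) \/ ~ proj1_sig d0 y]; exists d0.
  - move=> A B [e [De ->]] [f [Df ->]].
    have [g [Dg eg fg]] := Ddir e f De Df.
    exists [set y | ~ (a <= y /\ y < c) \/ ~ proj1_sig g y]; split.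
    + by exists g.
    + by move=> y /= [|ney]; [left|right => gy; apply: ney; apply: eg].
    + by move=> y /= [|ney]; [left|right => gy; apply: ney; apply: fg].
  - move=> y d0y.
    have [Sy|nSy] := pselect (a <= y /\ y < c).
      have [e [De ney]] := Hn' y Sy.
      by exists [set y | ~ (a <= y /\ y < c) \/ ~ proj1_sig e y];
        [exists e | right].
    by exists [set y | ~ (a <= y /\ y < c) \/ ~ proj1_sig d0 y];
      [exists d0 | left].
  - move=> O [[e [De ->]] d0O].
    have [g [Dg d0g eg]] := Ddir d0 e Dd0 De.
    have [x [gx Sx]] := H' g Dg.
    case: (d0O x (d0g x gx)) => //.
    by apply; apply: eg.
pose u : QRl R := exist _ (proj1_sig s `|` [set p])
   (conj (ex_intro _ p (or_intror erefl)) (@compactU1 _ p (proj2 (proj2_sig s)))).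
have : QRl_le s u.
  apply: sup2 => d Dd y [sy|->]; last by apply: Dp.
  by apply: (sup1 d Dd).
move=> /(_ p (or_intror erefl)) sp.
by apply: (bs p sp).
Qed.

Lemma archi_inv (b : R) : 0 < b ->
  exists N, forall m, (N <= m)%N -> (m.+1%:R)^-1 < b.
Proof.
move=> b0; exists (Num.Def.archi_bound b^-1) => m Nm.
rewrite invf_plt ?posrE ?ltr0n //.
apply: lt_le_trans (archi_boundP _) _; first by rewrite invr_ge0 ltW.
by rewrite ler_nat; apply: leq_trans Nm _.
Qed.

Lemma compl_open t c : @sorg_open R [set y | ~ (t <= y /\ y < c)].
Proof.
move=> y /= nS.
case: (ltP y t) => ya.
  exists y, t; split => //; split; first by split.
  by move=> z [_ za] -[az _]; move: (le_lt_trans az za); rewrite ltxx.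
have cy : c <= y by case: (ltP y c) => // yc; exfalso; apply: nS.
exists y, (y + 1); split; first by rewrite ltrDl.
split; first by split => //; rewrite ltrDl.
move=> z [yz _] -[_ zc].
by move: (le_lt_trans (le_trans cy yz) zc); rewrite ltxx.
Qed.

Definition K0 : QRl R.
Proof.
exists [set 0]; split; first by exists 0.
move=> C Co KC; have [W CW W0] := KC 0 erefl.
exists [set W]; split; first by move=> A ->.
  exact: finite_set1.
by move=> y ->; exists W.
Defined.

Lemma seq_compact (f : nat -> R) n :
  (forall m, 0 < f m /\ f m < (m.+1%:R)^-1) ->
  sorg_compact [set y | y = 0 \/ exists m, (n <= m)%N /\ y = f m].
Proof.
move=> hf C Co KC.
have [W0 CW0 W00] := KC 0 (or_introl erefl).
have [a [b [ab [[a0 b0] abW]]]] := Co W0 CW0 0 W00.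
have [N HN] := archi_inv b0.
have [g Hg] : {g : nat -> set R & forall m, C (g m) /\ ((n <= m)%N -> g m (f m))}.
  apply: (@choice nat (set R) (fun m W => C W /\ ((n <= m)%N -> W (f m)))) => m.
  case: (boolP (n <= m)%N) => nm.
    have [W CW Wf] := KC (f m) (or_intror (ex_intro _ m (conj nm erefl))).
    by exists W.
  by exists W0; split.
exists ([set W0] `|` (g @` [set m | (m < N)%N])); split.
- by move=> A [->|[m _ <-]] //; case: (Hg m).
- rewrite finite_setU; split; first exact: finite_set1.
  by apply: finite_image; apply: finite_II.
- move=> y [->|[m [nm ->]]]; first by exists W0 => //; left.
  case: (ltnP m N) => mN.
    by exists (g m); [right; exists m | case: (Hg m) => _; apply].
  exists W0; first by left.
  apply: abW; split; first by apply: le_trans a0 (ltW (proj1 (hf m))).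
  by apply: lt_trans (proj2 (hf m)) (HN m mN).
Qed.

Lemma near0 (U : set (QRl R)) : scott_open (@QRl_le R) U -> U K0 ->
  exists e, 0 < e /\ forall x, 0 < x -> x < e -> exists K, U K /\ proj1_sig K x.
Proof.
move=> [Uup Uin] UK0; apply: contrapT => Hn.
have bad : forall e, exists x, 0 < e -> [/\ 0 < x, x < e & forall K, U K -> ~ proj1_sig K x].
  move=> e; have [e0|ne0] := pselect (0 < e); last by exists 0.
  apply: contrapT => ne; apply: Hn; exists e; split => // x x0 xe.
  apply: contrapT => nK; apply: ne; exists x => _; split => // K UK Kx.
  by apply: nK; exists K.
have [f0 Hf0] := choice bad.
pose f m := f0 ((m.+1%:R)^-1 : R).
have hf : forall m, [/\ 0 < f m, f m < (m.+1%:R)^-1 & forall K, U K -> ~ proj1_sig K (f m)].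
  by move=> m; apply: Hf0; rewrite invr_gt0 ltr0n.
have hf' : forall m, 0 < f m /\ f m < (m.+1%:R)^-1 by move=> m; case: (hf m).
pose KQ n : QRl R := exist _ [set y | y = 0 \/ exists m, (n <= m)%N /\ y = f m]
   (conj (ex_intro _ 0 (or_introl erefl)) (@seq_compact f n hf')).
have [d [[n _ <-] Ud]] : exists d, range KQ d /\ U d.
  apply: (Uin (range KQ) K0) => //.
  - split; first by exists (KQ 0%N), 0%N.
    move=> _ _ [n _ <-] [m _ <-]; exists (KQ (maxn n m)); split.
    + by exists (maxn n m).
    + move=> y /= [->|[k [nk ->]]]; first by left.
      by right; exists k; split => //; apply: leq_trans nk; apply: leq_maxl.
    + move=> y /= [->|[k [nk ->]]]; first by left.
      by right; exists k; split => //; apply: leq_trans nk; apply: leq_maxr.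
  - split.
      by move=> _ [n _ <-] y /= ->; left.
    move=> u Hu y uy /=.
    have := Hu (KQ 0%N) (ex_intro2 _ _ 0%N I erefl) y uy.
    move=> /= [//|[m [_ ym]]].
    have [pos _ _] := hf m.
    have [N HN] := archi_inv (pos).
    have := Hu (KQ N) (ex_intro2 _ _ N I erefl) y uy.
    move=> /= [y0|[k [Nk yk]]].
      by move: pos; rewrite -ym y0 ltxx.
    have [_ fk _] := hf k.
    have := lt_trans fk (HN k Nk); rewrite -ym yk ltxx //.
have [_ _ nb] := hf n.
by apply: (nb _ Ud); right; exists n.
Qed.

End S.

Theorem proposition4p22 (R : realType) :
  ~ core_compact (scott_open (@QRl_le R)).
Proof.
move=> cc.
have Top : scott_open (@QRl_le R) setT.
  by split => // D s [[d Dd] _] _ _; exists d.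
have E := cc setT Top.
have : (\bigcup_(U in [set U | scott_open (@QRl_le R) U /\ way_below (scott_open (@QRl_le R)) U setT]) U) (K0 R).
  by rewrite -E.
move=> [U [Uo Uwb] UK0].
have [e [e0 He]] := near0 Uo UK0.
pose c := e / 2.
pose Dc := [set O : set (QRl R) | exists t, [/\ c / 2 <= t, t < c & O = box t c]].
have [O [[t [t1 t2 EO]] UO]] : exists W, Dc W /\ U `<=` W.
apply: Uwb.
- move=> _ [t [_ _ ->]]; exact: box_open.
- split; first by exists (box (c/2) c), (c/2); split => //; rewrite /c; lra.
  move=> _ _ [t1 [h1 h1' ->]] [t2 [h2 h2' ->]].
  case: (leP t1 t2) => h.
    exists (box t2 c); split; first by exists t2.
      move=> K HK x Kx [tx xc]; apply: (HK x Kx); split => //; lra.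
    by [].
  exists (box t1 c); split; first by exists t1.
    by [].
  move=> K HK x Kx [tx xc]; apply: (HK x Kx); split => //; lra.
- move=> K _.
  pose C := [set W : set R | exists t, [/\ c / 2 <= t, t < c &
                W = [set y | ~ (t <= y /\ y < c)]]].
  have [] := @compact_directed R (proj1_sig K) C (proj2 (proj2_sig K)).
  + by move=> _ [t [_ _ ->]]; apply: compl_open.
  + by exists [set y | ~ (c/2 <= y /\ y < c)], (c/2); split => //; rewrite /c; lra.
  + move=> _ _ [t1 [h1 h1' ->]] [t2 [h2 h2' ->]].
    case: (leP t1 t2) => h.
      exists [set y | ~ (t2 <= y /\ y < c)]; split; first by exists t2.
        move=> x /= Hx [tx xc]; apply: Hx; split => //; lra.
      by [].
    exists [set y | ~ (t1 <= y /\ y < c)]; split; first by exists t1.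
      by [].
    move=> x /= Hx [tx xc]; apply: Hx; split => //; lra.
  + move=> y Ky.
    have [Sy|nSy] := pselect (c/2 <= y /\ y < c).
      exists [set z | ~ ((y + c)/2 <= z /\ z < c)].
        exists ((y + c)/2); split => //; case: Sy => ? ?; lra.
      move=> /= [h _]; case: Sy => s1 s2; clear -h s1 s2; lra.
    by exists [set z | ~ (c/2 <= z /\ z < c)]; [exists (c/2); split => //; rewrite /c; lra|].
  + move=> _ [[t [h1 h2 ->]] KW].
    exists (box t c); first by exists t.
    by move=> x Kx; apply: KW.
rewrite EO in UO.
have [K [UK Kt]] := He t ltac:(rewrite /c in t1 t2 *; lra) ltac:(rewrite /c in t1 t2 *; lra).
by apply: (UO K UK t Kt); split => //; rewrite /c in t1 t2 *; lra.
Qed.
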